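(* Let $A$ be a C*-algebra, let $\{p_i\}_{i\in I}$ be a family of mutually orthogonal projections in the multiplier algebra $M(A)$, and let $B$ be a *-subalgebra of $A$ such that $B\subseteq\bigoplus_{i,j\in I}B\cap(p_iAp_j)$ (i.e. every $b\in B$ is a finite sum of elements of the sets $B\cap(p_iAp_j)$) and such that $B\cap(p_iAp_i)$ is a core subalgebra of $A$ for every $i\in I$. Then $B$ is a core subalgebra of $A$.
   Context: A representation of a *-algebra $B$ is a multiplicative, *-preserving, linear map $\pi:B\to\mathcal B(H)$ for some Hilbert space $H$ (no continuity assumed). A *-subalgebra $B$ of a C*-algebra $A$ is a core subalgebra of $A$ if every representation of $B$ is continuous with respect to the norm induced from $A$. *)

(* Defs.v *)
From Stdlib Require Import Reals List.
Open Scope R_scope.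

Record C := mkC { Re : R; Im : R }.
Definition C0 : C := mkC 0 0.
Definition C1 : C := mkC 1 0.
Definition Cadd (z w : C) : C := mkC (Re z + Re w) (Im z + Im w).
Definition Cmul (z w : C) : C :=
  mkC (Re z * Re w - Im z * Im w) (Re z * Im w + Im z * Re w).
Definition Cconj (z : C) : C := mkC (Re z) (- Im z).
Definition Cabs (z : C) : R := sqrt (Re z * Re z + Im z * Im z).

Definition norm_complete {T : Type} (add : T -> T -> T) (opp : T -> T)
  (nrm : T -> R) : Prop :=
  forall u : nat -> T,
    (forall eps, eps > 0 -> exists N, forall m n, (m >= N)%nat -> (n >= N)%nat ->
        nrm (add (u m) (opp (u n))) < eps) ->
    exists l, forall eps, eps > 0 -> exists N, forall n, (n >= N)%nat ->
        nrm (add (u n) (opp l)) < eps.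

Record CStarAlgebra := {
  car :> Type;
  zero : car;
  add : car -> car -> car;
  opp : car -> car;
  smul : C -> car -> car;
  mul : car -> car -> car;
  star : car -> car;
  norm : car -> R;
  addA : forall x y z, add x (add y z) = add (add x y) z;
  addC : forall x y, add x y = add y x;
  add0 : forall x, add zero x = x;
  addN : forall x, add x (opp x) = zero;
  smulDr : forall c x y, smul c (add x y) = add (smul c x) (smul c y);
  smulDl : forall c d x, smul (Cadd c d) x = add (smul c x) (smul d x);
  smulA : forall c d x, smul c (smul d x) = smul (Cmul c d) x;
  smul1 : forall x, smul C1 x = x;
  mulA : forall x y z, mul x (mul y z) = mul (mul x y) z;
  mulDl : forall x y z, mul (add x y) z = add (mul x z) (mul y z);
  mulDr : forall x y z, mul x (add y z) = add (mul x y) (mul x z);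
  smul_mull : forall c x y, smul c (mul x y) = mul (smul c x) y;
  smul_mulr : forall c x y, smul c (mul x y) = mul x (smul c y);
  starK : forall x, star (star x) = x;
  starD : forall x y, star (add x y) = add (star x) (star y);
  starZ : forall c x, star (smul c x) = smul (Cconj c) (star x);
  starM : forall x y, star (mul x y) = mul (star y) (star x);
  norm_ge0 : forall x, 0 <= norm x;
  norm_eq0 : forall x, norm x = 0 -> x = zero;
  norm_triangle : forall x y, norm (add x y) <= norm x + norm y;
  normZ : forall c x, norm (smul c x) = Cabs c * norm x;
  normM : forall x y, norm (mul x y) <= norm x * norm y;
  norm_cstar : forall x, norm (mul (star x) x) = norm x * norm x;
  norm_compl : norm_complete add opp norm
}.

Arguments zero {_}.

Definition star_subalgebra (A : CStarAlgebra) (B : A -> Prop) : Prop :=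
  B zero /\
  (forall x y, B x -> B y -> B (add A x y)) /\
  (forall c x, B x -> B (smul A c x)) /\
  (forall x y, B x -> B y -> B (mul A x y)) /\
  (forall x, B x -> B (star A x)).

(* ---------- multiplier algebra: double centralizers ---------- *)
Record multiplier (A : CStarAlgebra) := {
  mL : A -> A;   (* a |-> m a *)
  mR : A -> A;   (* a |-> a m *)
  m_ax : forall a b, mul A a (mL b) = mul A (mR a) b
}.
Arguments mL {A}. Arguments mR {A}.

(* m is a projection in M(A): m = m^2 = m-star, where the product is
   (L1,R1)(L2,R2) = (L1 o L2, R2 o R1) and the adjoint of (L,R) is
   (a |-> star (R (star a)), a |-> star (L (star a))). *)
Definition mprojection {A : CStarAlgebra} (m : multiplier A) : Prop :=
  (forall a, mL m (mL m a) = mL m a) /\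
  (forall a, mR m (mR m a) = mR m a) /\
  (forall a, mL m a = star A (mR m (star A a))) /\
  (forall a, mR m a = star A (mL m (star A a))).

(* m n = 0 in M(A) *)
Definition mprod_zero {A : CStarAlgebra} (m n : multiplier A) : Prop :=
  (forall a, mL m (mL n a) = zero) /\ (forall a, mR n (mR m a) = zero).

Definition in_corner {A : CStarAlgebra} (p q : multiplier A) (x : A) : Prop :=
  exists a : A, x = mL p (mR q a).

Record Hilbert := {
  hcar :> Type;
  hzero : hcar;
  hadd : hcar -> hcar -> hcar;
  hopp : hcar -> hcar;
  hsmul : C -> hcar -> hcar;
  inner : hcar -> hcar -> C;   (* linear in the first variable *)
  haddA : forall x y z, hadd x (hadd y z) = hadd (hadd x y) z;
  haddC : forall x y, hadd x y = hadd y x;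
  hadd0 : forall x, hadd hzero x = x;
  haddN : forall x, hadd x (hopp x) = hzero;
  hsmulDr : forall c x y, hsmul c (hadd x y) = hadd (hsmul c x) (hsmul c y);
  hsmulDl : forall c d x, hsmul (Cadd c d) x = hadd (hsmul c x) (hsmul d x);
  hsmulA : forall c d x, hsmul c (hsmul d x) = hsmul (Cmul c d) x;
  hsmul1 : forall x, hsmul C1 x = x;
  innerDl : forall x y z, inner (hadd x y) z = Cadd (inner x z) (inner y z);
  innerZl : forall c x y, inner (hsmul c x) y = Cmul c (inner x y);
  inner_conj : forall x y, inner y x = Cconj (inner x y);
  inner_pos : forall x, 0 <= Re (inner x x);
  inner_def : forall x, inner x x = C0 -> x = hzero;
  hcompl : norm_complete hadd hopp (fun x => sqrt (Re (inner x x)))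
}.
Arguments hzero {_}.

Definition hnorm {H : Hilbert} (x : H) : R := sqrt (Re (inner H x x)).

Definition bounded_operator (H : Hilbert) (T : H -> H) : Prop :=
  (forall x y, T (hadd H x y) = hadd H (T x) (T y)) /\
  (forall c x, T (hsmul H c x) = hsmul H c (T x)) /\
  (exists M, forall x, hnorm (T x) <= M * hnorm x).

Definition opnorm_le (H : Hilbert) (T : H -> H) (c : R) : Prop :=
  forall x, hnorm (T x) <= c * hnorm x.

(* a representation of the *-algebra B (a *-subalgebra of A) on H:
   multiplicative, *-preserving, linear map B -> B(H); no continuity *)
Definition representation (A : CStarAlgebra) (B : A -> Prop) (H : Hilbert)
  (pi : A -> H -> H) : Prop :=
  (forall b, B b -> bounded_operator H (pi b)) /\
  (forall b1 b2, B b1 -> B b2 -> forall x,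
      pi (add A b1 b2) x = hadd H (pi b1 x) (pi b2 x)) /\
  (forall c b, B b -> forall x, pi (smul A c b) x = hsmul H c (pi b x)) /\
  (forall b1 b2, B b1 -> B b2 -> forall x, pi (mul A b1 b2) x = pi b1 (pi b2 x)) /\
  (forall b, B b -> forall x y, inner H (pi b x) y = inner H x (pi (star A b) y)).

Definition rep_continuous (A : CStarAlgebra) (B : A -> Prop) (H : Hilbert)
  (pi : A -> H -> H) : Prop :=
  forall b0, B b0 -> forall eps, eps > 0 -> exists delta, delta > 0 /\
    forall b, B b -> norm A (add A b (opp A b0)) < delta ->
      exists c, c < eps /\
        opnorm_le H (fun x => hadd H (pi b x) (hopp H (pi b0 x))) c.

Definition core_subalgebra (A : CStarAlgebra) (B : A -> Prop) : Prop :=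
  star_subalgebra A B /\
  forall (H : Hilbert) (pi : A -> H -> H),
    representation A B H pi -> rep_continuous A B H pi.

Definition sumA {A : CStarAlgebra} (l : list A) : A :=
  fold_right (add A) zero l.

(* Main.v *)
Require Import Defs.
From Stdlib Require Import Reals List Lra Lia Classical.
Open Scope R_scope.

Lemma A_add0r (A : CStarAlgebra) (x : A) : add A x zero = x.
Proof. rewrite addC. apply add0. Qed.

Lemma A_idem (A : CStarAlgebra) (x : A) : add A x x = x -> x = zero.
Proof.
  intro H. transitivity (add A (add A x x) (opp A x)).
  - rewrite <- addA, addN, A_add0r. reflexivity.
  - rewrite H, addN. reflexivity.
Qed.

Lemma A_oppu (A : CStarAlgebra) (x y : A) : add A x y = zero -> y = opp A x.
Proof.
  intro H. rewrite <- (add0 A y), <- (addN A x), (addC A x (opp A x)), <- addA, H, A_add0r.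
  reflexivity.
Qed.

Lemma A_oppK (A : CStarAlgebra) (x : A) : opp A (opp A x) = x.
Proof. symmetry. apply A_oppu. rewrite addC. apply addN. Qed.

Lemma A_mulx0 (A : CStarAlgebra) (x : A) : mul A x zero = zero.
Proof. apply A_idem. rewrite <- mulDr, add0. reflexivity. Qed.

Lemma A_mul0x (A : CStarAlgebra) (x : A) : mul A zero x = zero.
Proof. apply A_idem. rewrite <- mulDl, add0. reflexivity. Qed.

Lemma Cz_add : Cadd Defs.C0 Defs.C0 = Defs.C0.
Proof. unfold Cadd, Defs.C0; simpl. f_equal; ring. Qed.

Lemma A_smul0 (A : CStarAlgebra) (x : A) : smul A Defs.C0 x = zero.
Proof. apply A_idem. rewrite <- smulDl, Cz_add. reflexivity. Qed.

Definition Cm1 := mkC (-1) 0.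

Lemma A_opp_smul (A : CStarAlgebra) (x : A) : opp A x = smul A Cm1 x.
Proof.
  symmetry. apply A_oppu. rewrite <- (smul1 A x) at 1. rewrite <- smulDl.
  replace (Cadd Defs.C1 Cm1) with Defs.C0. apply A_smul0.
  unfold Cadd, Defs.C0, Defs.C1, Cm1; simpl. f_equal; ring.
Qed.

Lemma A_star0 (A : CStarAlgebra) : star A (@zero A) = zero.
Proof. apply A_idem. rewrite <- starD, add0. reflexivity. Qed.

Lemma A_norm0 (A : CStarAlgebra) : norm A (@zero A) = 0.
Proof.
  rewrite <- (A_smul0 A zero), normZ. unfold Cabs, Defs.C0; simpl.
  replace (0*0+0*0) with 0 by ring. rewrite sqrt_0. ring.
Qed.

Lemma A_norm_star_le (A : CStarAlgebra) (x : A) : norm A x <= norm A (star A x).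
Proof.
  pose proof (norm_cstar A x) as H. pose proof (normM A (star A x) x) as H2.
  pose proof (norm_ge0 A x). pose proof (norm_ge0 A (star A x)).
  destruct (Req_dec (norm A x) 0) as [E|E]. lra.
  nra.
Qed.

Lemma A_norm_star (A : CStarAlgebra) (x : A) : norm A (star A x) = norm A x.
Proof.
  apply Rle_antisym. rewrite <- (starK A x) at 2. apply A_norm_star_le. apply A_norm_star_le.
Qed.

Lemma A_mul_opp (A : CStarAlgebra) (a v : A) : mul A a (opp A v) = opp A (mul A a v).
Proof. rewrite !A_opp_smul, <- smul_mulr. reflexivity. Qed.

Lemma A_opp_mul (A : CStarAlgebra) (a v : A) : mul A (opp A v) a = opp A (mul A v a).
Proof. rewrite !A_opp_smul, <- smul_mull. reflexivity. Qed.

Lemma A_sub_eq (A : CStarAlgebra) (u v : A) : add A u (opp A v) = zero -> u = v.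
Proof.
  intro H. apply A_oppu in H. rewrite <- (A_oppK A u), <- H, A_oppK. reflexivity.
Qed.

Lemma A_left_eq (A : CStarAlgebra) (u v : A) :
  (forall a, mul A a u = mul A a v) -> u = v.
Proof.
  intro H. apply A_sub_eq. set (d := add A u (opp A v)).
  assert (Hd : mul A (star A d) d = zero).
  { unfold d. rewrite mulDr, A_mul_opp, H, addN. reflexivity. }
  pose proof (norm_cstar A d) as Hc. rewrite Hd, A_norm0 in Hc.
  apply norm_eq0. pose proof (norm_ge0 A d). nra.
Qed.

Lemma A_right_eq (A : CStarAlgebra) (u v : A) :
  (forall a, mul A u a = mul A v a) -> u = v.
Proof.
  intro H. apply A_sub_eq. set (d := add A u (opp A v)).
  assert (Hd : mul A d (star A d) = zero).
  { unfold d. rewrite mulDl, A_opp_mul, H, addN. reflexivity. }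
  pose proof (norm_cstar A (star A d)) as Hc. rewrite starK, Hd, A_norm0 in Hc.
  assert (E : star A d = zero).
  { apply norm_eq0. pose proof (norm_ge0 A (star A d)). nra. }
  rewrite <- (starK A d), E, A_star0. reflexivity.
Qed.
Lemma mL_mul (A : CStarAlgebra) (m : multiplier A) (x y : A) :
  mL m (mul A x y) = mul A (mL m x) y.
Proof.
  apply A_left_eq. intro a. rewrite m_ax, mulA, <- m_ax, mulA. reflexivity.
Qed.

Lemma mR_mul (A : CStarAlgebra) (m : multiplier A) (x y : A) :
  mR m (mul A x y) = mul A x (mR m y).
Proof.
  apply A_right_eq. intro b. rewrite <- m_ax, <- mulA, m_ax, mulA. reflexivity.
Qed.

Lemma mL_add (A : CStarAlgebra) (m : multiplier A) (x y : A) :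
  mL m (add A x y) = add A (mL m x) (mL m y).
Proof.
  apply A_left_eq. intro a. rewrite m_ax, mulDr, mulDr, <- !m_ax. reflexivity.
Qed.

Lemma mR_add (A : CStarAlgebra) (m : multiplier A) (x y : A) :
  mR m (add A x y) = add A (mR m x) (mR m y).
Proof.
  apply A_right_eq. intro b. rewrite <- m_ax, mulDl, mulDl, !m_ax. reflexivity.
Qed.

Lemma mL_zero (A : CStarAlgebra) (m : multiplier A) : mL m zero = zero.
Proof. apply A_idem. rewrite <- mL_add, add0. reflexivity. Qed.

Lemma mR_zero (A : CStarAlgebra) (m : multiplier A) : mR m zero = zero.
Proof. apply A_idem. rewrite <- mR_add, add0. reflexivity. Qed.

Lemma mLR_comm (A : CStarAlgebra) (p q : multiplier A) (c : A) :
  mL p (mR q c) = mR q (mL p c).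
Proof.
  apply A_left_eq. intro d. rewrite m_ax, <- (mR_mul A q d), m_ax, mR_mul. reflexivity.
Qed.

Lemma star_mL (A : CStarAlgebra) (p : multiplier A) (a : A) :
  mprojection p -> star A (mL p a) = mR p (star A a).
Proof. intros (_ & _ & _ & H4). rewrite H4, starK. reflexivity. Qed.

Lemma star_mR (A : CStarAlgebra) (p : multiplier A) (a : A) :
  mprojection p -> star A (mR p a) = mL p (star A a).
Proof. intros (_ & _ & H3 & _). rewrite H3, starK. reflexivity. Qed.

Lemma norm_mL (A : CStarAlgebra) (p : multiplier A) (a : A) :
  mprojection p -> norm A (mL p a) <= norm A a.
Proof.
  intro Hp. pose proof (norm_cstar A (mL p a)) as Hc.
  rewrite (star_mL A p a Hp), <- m_ax in Hc.
  destruct Hp as (H1 & _). rewrite H1 in Hc.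
  pose proof (normM A (star A a) (mL p a)). rewrite A_norm_star in H.
  pose proof (norm_ge0 A a). pose proof (norm_ge0 A (mL p a)).
  destruct (Req_dec (norm A (mL p a)) 0). lra. nra.
Qed.

Lemma norm_mR (A : CStarAlgebra) (p : multiplier A) (a : A) :
  mprojection p -> norm A (mR p a) <= norm A a.
Proof.
  intro Hp. pose proof Hp as (_ & _ & _ & H4). rewrite H4, A_norm_star.
  rewrite <- (A_norm_star A a). apply norm_mL. exact Hp.
Qed.

Lemma corner_mul (A : CStarAlgebra) (p1 p2 p3 p4 : multiplier A) (x y : A) :
  in_corner p1 p2 x -> in_corner p3 p4 y -> in_corner p1 p4 (mul A x y).
Proof.
  intros [a Ha] [b Hb]. subst.
  exists (mul A (mR p2 a) (mL p3 b)).
  rewrite <- mL_mul. f_equal. rewrite mLR_comm, <- mR_mul. reflexivity.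
Qed.

Lemma corner_star (A : CStarAlgebra) (p q : multiplier A) (x : A) :
  mprojection p -> mprojection q -> in_corner p q x -> in_corner q p (star A x).
Proof.
  intros Hp Hq [a Ha]. subst. exists (star A a).
  rewrite star_mL, star_mR by assumption. rewrite mLR_comm. reflexivity.
Qed.
Definition pij {A : CStarAlgebra} {I : Type} (p : I -> multiplier A) (i j : I) (w : A) : A :=
  mL (p i) (mR (p j) w).

Lemma pij_hit (A : CStarAlgebra) (I : Type) (p : I -> multiplier A)
  (hp : forall i, mprojection (p i)) (k l : I) (t : A) :
  in_corner (p k) (p l) t -> pij p k l t = t.
Proof.
  intros [a Ha]. subst. unfold pij. rewrite <- mLR_comm.
  destruct (hp k) as (Hk & _). destruct (hp l) as (_ & Hl & _).
  rewrite Hk, Hl. reflexivity.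
Qed.

Lemma pij_miss (A : CStarAlgebra) (I : Type) (p : I -> multiplier A)
  (horth : forall i j, i <> j -> mprod_zero (p i) (p j)) (i j k l : I) (t : A) :
  in_corner (p k) (p l) t -> (i <> k \/ j <> l) -> pij p i j t = zero.
Proof.
  intros [a Ha] Hne. subst. unfold pij. rewrite <- mLR_comm.
  destruct Hne as [Hne|Hne].
  - destruct (horth i k Hne) as (H1 & _). apply H1.
  - assert (Hlj : l <> j) by congruence.
    destruct (horth l j Hlj) as (_ & H2). rewrite H2, mL_zero, mL_zero. reflexivity.
Qed.

Lemma pij_add (A : CStarAlgebra) (I : Type) (p : I -> multiplier A) i j (x y : A) :
  pij p i j (add A x y) = add A (pij p i j x) (pij p i j y).
Proof. unfold pij. rewrite mR_add, mL_add. reflexivity. Qed.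

Lemma pij_zero (A : CStarAlgebra) (I : Type) (p : I -> multiplier A) i j :
  pij p i j (@zero A) = zero.
Proof. unfold pij. rewrite mR_zero, mL_zero. reflexivity. Qed.

Lemma pij_sum (A : CStarAlgebra) (I : Type) (p : I -> multiplier A) i j (L : list A) :
  pij p i j (sumA L) = sumA (map (pij p i j) L).
Proof.
  induction L as [|t L IH]; simpl. apply pij_zero. rewrite pij_add, IH. reflexivity.
Qed.

Lemma sumA_map_add (A : CStarAlgebra) (X : Type) (f g : X -> A) (L : list X) :
  sumA (map (fun x => add A (f x) (g x)) L) = add A (sumA (map f L)) (sumA (map g L)).
Proof.
  induction L as [|t L IH]; simpl. symmetry; apply add0.
  rewrite IH. rewrite !addA. f_equal. rewrite <- !addA. f_equal. apply addC.
Qed.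

Lemma sumA_zero (A : CStarAlgebra) (X : Type) (f : X -> A) (L : list X) :
  (forall x, In x L -> f x = zero) -> sumA (map f L) = zero.
Proof.
  induction L as [|t L IH]; simpl; intro H. reflexivity.
  rewrite H by auto. rewrite IH by auto. apply add0.
Qed.

Lemma sumA_swap (A : CStarAlgebra) (X Y : Type) (F : X -> Y -> A) (L1 : list X) (L2 : list Y) :
  sumA (map (fun a => sumA (map (fun b => F a b) L2)) L1) =
  sumA (map (fun b => sumA (map (fun a => F a b) L1)) L2).
Proof.
  induction L1 as [|a L1 IH]; simpl.
  - symmetry. apply sumA_zero. reflexivity.
  - rewrite IH. rewrite <- sumA_map_add. reflexivity.
Qed.

Lemma sumA_single (A : CStarAlgebra) (X : Type) (f : X -> A) (S : list X) (k : X) :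
  NoDup S -> In k S -> (forall j, In j S -> j <> k -> f j = zero) -> sumA (map f S) = f k.
Proof.
  induction S as [|a S IH]; simpl; intros Hnd Hin Hz. contradiction.
  inversion Hnd; subst.
  destruct (classic (a = k)) as [E|E].
  - subst. rewrite sumA_zero. apply A_add0r.
    intros x Hx. apply Hz. auto. intro; subst; contradiction.
  - rewrite Hz by auto. rewrite add0. apply IH; auto. destruct Hin; [contradiction|auto].
Qed.

Lemma sumA_app (A : CStarAlgebra) (L1 L2 : list A) :
  sumA (L1 ++ L2) = add A (sumA L1) (sumA L2).
Proof.
  induction L1 as [|a L1 IH]; simpl. symmetry; apply add0. rewrite IH, addA. reflexivity.
Qed.

Lemma sumA_mulr (A : CStarAlgebra) (x : A) (L : list A) :
  mul A x (sumA L) = sumA (map (mul A x) L).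
Proof.
  induction L as [|a L IH]; simpl. apply A_mulx0. rewrite mulDr, IH. reflexivity.
Qed.

Lemma sumA_star (A : CStarAlgebra) (L : list A) :
  star A (sumA L) = sumA (map (star A) L).
Proof.
  induction L as [|a L IH]; simpl. apply A_star0. rewrite starD, IH. reflexivity.
Qed.

Lemma sumA_B (A : CStarAlgebra) (B : A -> Prop) (L : list A) :
  star_subalgebra A B -> (forall t, In t L -> B t) -> B (sumA L).
Proof.
  intros (H0 & Ha & _) . induction L as [|a L IH]; simpl; intro H. exact H0.
  apply Ha; auto.
Qed.
Definition decomp (A : CStarAlgebra) (I : Type) (p : I -> multiplier A) (B : A -> Prop)
  (S : list I) (w : A) : Prop :=
  exists l : list (I * I * A),
    (forall t, In t l -> B (snd t) /\ in_corner (p (fst (fst t))) (p (snd (fst t))) (snd t)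
        /\ In (fst (fst t)) S /\ In (snd (fst t)) S) /\
    w = sumA (map snd l).

Definition prodl {A : CStarAlgebra} {I : Type} (l1 l2 : list (I * I * A)) : list (I * I * A) :=
  flat_map (fun t1 => map (fun t2 => ((fst (fst t1), snd (fst t2)), mul A (snd t1) (snd t2))) l2) l1.

Lemma prodl_sum (A : CStarAlgebra) (I : Type) (l1 l2 : list (I * I * A)) :
  mul A (sumA (map snd l1)) (sumA (map snd l2)) = sumA (map snd (prodl l1 l2)).
Proof.
  unfold prodl. induction l1 as [|t l1 IH]; simpl. apply A_mul0x.
  rewrite map_app, sumA_app, <- IH, mulDl. f_equal.
  rewrite sumA_mulr, !map_map. reflexivity.
Qed.

Lemma decomp_mul (A : CStarAlgebra) (I : Type) (p : I -> multiplier A) (B : A -> Prop) S x y :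
  star_subalgebra A B -> decomp A I p B S x -> decomp A I p B S y -> decomp A I p B S (mul A x y).
Proof.
  intros hB [l1 [H1 E1]] [l2 [H2 E2]]. exists (prodl l1 l2). split.
  - intros t Ht. unfold prodl in Ht. apply in_flat_map in Ht. destruct Ht as [t1 [Ht1 Ht]].
    apply in_map_iff in Ht. destruct Ht as [t2 [Et Ht2]]. subst t. simpl.
    destruct (H1 t1 Ht1) as (B1 & C1' & S1 & _). destruct (H2 t2 Ht2) as (B2 & C2' & _ & S2).
    repeat split; auto.
    + destruct hB as (_ & _ & _ & Hm & _). auto.
    + eapply corner_mul; eauto.
  - subst. apply prodl_sum.
Qed.

Lemma decomp_star (A : CStarAlgebra) (I : Type) (p : I -> multiplier A) (B : A -> Prop) S x :
  (forall i, mprojection (p i)) ->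
  star_subalgebra A B -> decomp A I p B S x -> decomp A I p B S (star A x).
Proof.
  intros hp hB [l [H E]].
  exists (map (fun t => ((snd (fst t), fst (fst t)), star A (snd t))) l). split.
  - intros t Ht. apply in_map_iff in Ht. destruct Ht as [t1 [Et Ht1]]. subst t. simpl.
    destruct (H t1 Ht1) as (B1 & C1' & S1 & S2). repeat split; auto.
    + destruct hB as (_ & _ & _ & _ & Hs). auto.
    + apply corner_star; auto.
  - subst. rewrite sumA_star, !map_map. reflexivity.
Qed.

Lemma decomp_B (A : CStarAlgebra) (I : Type) (p : I -> multiplier A) (B : A -> Prop) S x :
  star_subalgebra A B -> decomp A I p B S x -> B x.
Proof.
  intros hB [l [H E]]. subst. apply sumA_B; auto. intros t Ht.
  apply in_map_iff in Ht. destruct Ht as [t1 [Et Ht1]]. subst. apply H; auto.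
Qed.

Lemma decomp_pijB (A : CStarAlgebra) (I : Type) (p : I -> multiplier A) (B : A -> Prop) S x :
  (forall i, mprojection (p i)) ->
  (forall i j, i <> j -> mprod_zero (p i) (p j)) ->
  star_subalgebra A B -> decomp A I p B S x -> forall i j, B (pij p i j x).
Proof.
  intros hp horth hB [l [H E]] i j. subst. rewrite pij_sum. apply sumA_B; auto.
  intros t Ht. apply in_map_iff in Ht. destruct Ht as [t1 [Et Ht1]]. subst t.
  apply in_map_iff in Ht1. destruct Ht1 as [t [Et Ht]]. subst t1.
  destruct (H t Ht) as (Bt & Ct & _).
  destruct (classic (i = fst (fst t) /\ j = snd (fst t))) as [[E1 E2]|NE].
  - subst. rewrite pij_hit; auto.
  - rewrite (pij_miss A I p horth i j _ _ _ Ct). destruct hB; auto.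
    destruct (classic (i = fst (fst t))); [right; intro; apply NE; auto | left; auto].
Qed.

Lemma decomp_grid (A : CStarAlgebra) (I : Type) (p : I -> multiplier A) (B : A -> Prop) S x :
  (forall i, mprojection (p i)) ->
  (forall i j, i <> j -> mprod_zero (p i) (p j)) ->
  NoDup S -> decomp A I p B S x ->
  x = sumA (map (fun i => sumA (map (fun j => pij p i j x) S)) S).
Proof.
  intros hp horth Hnd [l [H E]]. subst x.
  transitivity (sumA (map (fun t => sumA (map (fun i => sumA (map (fun j => pij p i j (snd t)) S)) S)) l)).
  - f_equal. apply map_ext_in. intros t Ht. symmetry.
    destruct (H t Ht) as (Bt & Ct & Si & Sj).
    rewrite (sumA_single A I _ S (fst (fst t)) Hnd Si).
    + rewrite (sumA_single A I _ S (snd (fst t)) Hnd Sj).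
      * apply pij_hit; auto.
      * intros j _ Hj. apply (pij_miss A I p horth _ _ _ _ _ Ct). right; auto.
    + intros i _ Hi. apply sumA_zero. intros j _.
      apply (pij_miss A I p horth _ _ _ _ _ Ct). left; auto.
  - rewrite (sumA_swap A _ _ (fun t i => sumA (map (fun j => pij p i j (snd t)) S))).
    f_equal. apply map_ext. intro i.
    rewrite (sumA_swap A _ _ (fun t j => pij p i j (snd t))).
    f_equal. apply map_ext. intro j. rewrite pij_sum, map_map. reflexivity.
Qed.
Lemma H_add0r (H : Hilbert) (x : H) : hadd H x hzero = x.
Proof. rewrite haddC. apply hadd0. Qed.

Lemma H_idem (H : Hilbert) (x : H) : hadd H x x = x -> x = hzero.
Proof.
  intro E. transitivity (hadd H (hadd H x x) (hopp H x)).
  - rewrite <- haddA, haddN, H_add0r. reflexivity.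
  - rewrite E, haddN. reflexivity.
Qed.

Lemma H_oppu (H : Hilbert) (x y : H) : hadd H x y = hzero -> y = hopp H x.
Proof.
  intro E. rewrite <- (hadd0 H y), <- (haddN H x), (haddC H x (hopp H x)), <- haddA, E, H_add0r.
  reflexivity.
Qed.

Lemma H_opp0 (H : Hilbert) : hopp H (@hzero H) = hzero.
Proof. symmetry. apply H_oppu. apply hadd0. Qed.

Lemma Re_conj (H : Hilbert) (x y : H) : Re (inner H y x) = Re (inner H x y).
Proof. rewrite inner_conj. reflexivity. Qed.

Lemma Re_inner0 (H : Hilbert) (v : H) : Re (inner H hzero v) = 0.
Proof.
  pose proof (innerDl H hzero hzero v) as E. rewrite hadd0 in E.
  assert (Re (inner H hzero v) = Re (inner H hzero v) + Re (inner H hzero v)).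
  { rewrite E at 1. reflexivity. }
  lra.
Qed.

Lemma hnorm_ge0 (H : Hilbert) (x : H) : 0 <= hnorm x.
Proof. apply sqrt_pos. Qed.

Lemma hnorm_sq (H : Hilbert) (x : H) : hnorm x * hnorm x = Re (inner H x x).
Proof. apply sqrt_sqrt. apply inner_pos. Qed.

Lemma hnorm0 (H : Hilbert) : hnorm (@hzero H) = 0.
Proof. unfold hnorm. rewrite Re_inner0. apply sqrt_0. Qed.

Lemma quad (H : Hilbert) (u v : H) (s : R) :
  Re (inner H (hadd H u (hsmul H (mkC s 0) v)) (hadd H u (hsmul H (mkC s 0) v))) =
  Re (inner H u u) + 2 * s * Re (inner H u v) + s * s * Re (inner H v v).
Proof.
  set (w := hadd H u (hsmul H (mkC s 0) v)).
  assert (E1 : Re (inner H w w) = Re (inner H u w) + s * Re (inner H v w)).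
  { unfold w at 1. rewrite innerDl, innerZl. simpl. ring. }
  assert (E2 : Re (inner H u w) = Re (inner H u u) + s * Re (inner H v u)).
  { rewrite Re_conj. unfold w. rewrite innerDl, innerZl. simpl. ring. }
  assert (E3 : Re (inner H v w) = Re (inner H u v) + s * Re (inner H v v)).
  { rewrite Re_conj. unfold w. rewrite innerDl, innerZl. simpl. ring. }
  rewrite E1, E2, E3, (Re_conj H u v). ring.
Qed.

Lemma sq_le (a b : R) : 0 <= a -> 0 <= b -> a * a <= b * b -> a <= b.
Proof. intros. nra. Qed.

Lemma CS (H : Hilbert) (u v : H) : Re (inner H u v) <= hnorm u * hnorm v.
Proof.
  pose proof (hnorm_sq H u) as Eu. pose proof (hnorm_sq H v) as Ev.
  pose proof (hnorm_ge0 H u). pose proof (hnorm_ge0 H v).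
  set (b := Re (inner H u v)) in *.
  assert (Q : forall s, 0 <= hnorm u * hnorm u + 2 * s * b + s * s * (hnorm v * hnorm v)).
  { intro s. rewrite Eu, Ev. unfold b. rewrite <- quad. apply inner_pos. }
  destruct (Req_dec (hnorm v) 0) as [Z|Z].
  - rewrite Z. destruct (Rle_dec b 0). lra.
    exfalso. specialize (Q (- (hnorm u * hnorm u + 1) / (2 * b))). rewrite Z in Q.
    assert (0 < b) by lra.
    assert (E : 2 * (- (hnorm u * hnorm u + 1) / (2 * b)) * b = - (hnorm u * hnorm u + 1)) by (field; lra).
    rewrite E in Q. lra.
  - destruct (Rle_dec b 0). nra.
    assert (hv : 0 < hnorm v) by lra.
    specialize (Q (- b / (hnorm v * hnorm v))).
    assert (b * b <= (hnorm u * hnorm v) * (hnorm u * hnorm v)).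
    { assert (K : 0 <= hnorm u * hnorm u - b * b / (hnorm v * hnorm v)).
      { replace (hnorm u * hnorm u - b * b / (hnorm v * hnorm v)) with
          (hnorm u * hnorm u + 2 * (- b / (hnorm v * hnorm v)) * b +
           - b / (hnorm v * hnorm v) * (- b / (hnorm v * hnorm v)) * (hnorm v * hnorm v))
          by (field; lra). exact Q. }
      assert (K2 : b * b / (hnorm v * hnorm v) <= hnorm u * hnorm u) by lra.
      apply (Rmult_le_compat_r (hnorm v * hnorm v)) in K2; [|nra].
      replace (b * b / (hnorm v * hnorm v) * (hnorm v * hnorm v)) with (b * b) in K2 by (field; lra).
      nra. }
    apply sq_le; nra.
Qed.
Lemma htri (H : Hilbert) (u v : H) : hnorm (hadd H u v) <= hnorm u + hnorm v.
Proof.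
  pose proof (quad H u v 1) as Q. change (mkC 1 0) with Defs.C1 in Q. rewrite hsmul1 in Q.
  pose proof (CS H u v). rewrite <- !hnorm_sq in Q.
  pose proof (hnorm_ge0 H u). pose proof (hnorm_ge0 H v). pose proof (hnorm_ge0 H (hadd H u v)).
  apply sq_le; nra.
Qed.

Lemma hnorm_smul (H : Hilbert) (r : R) (v : H) : hnorm (hsmul H (mkC r 0) v) = Rabs r * hnorm v.
Proof.
  pose proof (quad H hzero v r) as Q. rewrite hadd0, Re_inner0, Re_inner0 in Q.
  unfold hnorm at 1. rewrite Q. replace (0 + 2 * r * 0 + r * r * Re (inner H v v)) with
   ((r * r) * Re (inner H v v)) by ring.
  rewrite sqrt_mult. rewrite <- sqrt_Rsqr_abs. reflexivity.
  nra. apply inner_pos.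
Qed.

Lemma pi_zero (A : CStarAlgebra) B (H : Hilbert) pi :
  star_subalgebra A B -> representation A B H pi -> forall x, pi zero x = hzero.
Proof.
  intros hB (_ & Hadd & _) x. destruct hB as (H0 & _).
  apply H_idem. rewrite <- Hadd by auto. rewrite add0. reflexivity.
Qed.

Lemma B_opp (A : CStarAlgebra) B b : star_subalgebra A B -> B b -> B (opp A b).
Proof. intros (_ & _ & Hs & _) Hb. rewrite A_opp_smul. auto. Qed.

Lemma pi_opp (A : CStarAlgebra) B (H : Hilbert) pi b :
  star_subalgebra A B -> representation A B H pi -> B b ->
  forall x, pi (opp A b) x = hopp H (pi b x).
Proof.
  intros hB hr Hb x. apply H_oppu. pose proof hr as (_ & Hadd & _).
  rewrite <- Hadd; auto. rewrite addN. eapply pi_zero; eauto. apply B_opp; auto.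
Qed.

Lemma pi_sum_bound (A : CStarAlgebra) B (H : Hilbert) pi (L : list A) (x : H) (beta : R) :
  star_subalgebra A B -> representation A B H pi ->
  (forall t, In t L -> B t) -> (forall t, In t L -> hnorm (pi t x) <= beta) ->
  hnorm (pi (sumA L) x) <= INR (length L) * beta.
Proof.
  intros hB hr. induction L as [|a L IH]; intros HB Hb.
  - change (sumA nil) with (@zero A). rewrite (pi_zero A B H pi hB hr), hnorm0. simpl. lra.
  - change (sumA (a::L)) with (add A a (sumA L)). change (length (a::L)) with (S (length L)).
    assert (BS : B (sumA L)) by (apply sumA_B; auto; intros; apply HB; right; auto).
    pose proof hr as (_ & Hadd & _). rewrite Hadd; [| apply HB; left; auto | exact BS].
    eapply Rle_trans. apply htri. rewrite S_INR.
    specialize (IH (fun t h => HB t (or_intror h)) (fun t h => Hb t (or_intror h))).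
    specialize (Hb a (or_introl eq_refl)). lra.
Qed.

Lemma keyL (A : CStarAlgebra) B (H : Hilbert) pi (z : A) (c : R) :
  star_subalgebra A B -> representation A B H pi -> B z ->
  (forall x, hnorm (pi (mul A (star A z) z) x) <= c * hnorm x) ->
  forall x, hnorm (pi z x) * hnorm (pi z x) <= c * (hnorm x * hnorm x).
Proof.
  intros hB hr Hz Hc x. pose proof hr as (_ & _ & _ & Hmul & Hinner).
  assert (Bs : B (star A z)) by (destruct hB as (_ & _ & _ & _ & Hs); auto).
  rewrite hnorm_sq, Hinner by auto. rewrite <- Hmul by auto.
  eapply Rle_trans. apply CS. specialize (Hc x). pose proof (hnorm_ge0 H x). nra.
Qed.
Lemma Cabs_real (r : R) : Cabs (mkC r 0) = Rabs r.
Proof. unfold Cabs; simpl. replace (r * r + 0 * 0) with (Rsqr r) by (unfold Rsqr; ring).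
  apply sqrt_Rsqr_abs. Qed.

Lemma core_K (A : CStarAlgebra) (B P : A -> Prop) (H : Hilbert) pi :
  star_subalgebra A B -> representation A B H pi -> core_subalgebra A P ->
  (forall z, P z -> B z) ->
  exists K, 0 <= K /\ forall z, P z -> forall x, hnorm (pi z x) <= K * norm A z * hnorm x.
Proof.
  intros hB hr [hP hc] PB.
  assert (rP : representation A P H pi).
  { destruct hr as (r1 & r2 & r3 & r4 & r5).
    split; [intros; apply r1; auto|].
    split; [intros; apply r2; auto|].
    split; [intros; apply r3; auto|].
    split; [intros; apply r4; auto|].
    intros; apply r5; auto. }
  destruct hP as (P0 & Padd & Psmul & Pmul & Pstar).
  destruct (hc H pi rP zero P0 1 Rlt_0_1) as [delta [Hd Hcont]].
  exists (2 / delta). split. apply Rlt_le. apply Rdiv_lt_0_compat; lra.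
  intros z Pz x.
  pose proof (norm_ge0 A z). pose proof (hnorm_ge0 H x). pose proof (hnorm_ge0 H (pi z x)).
  destruct (Req_dec (norm A z) 0) as [Z|Z].
  - apply norm_eq0 in Z. subst z. rewrite (pi_zero A B H pi hB hr), hnorm0, A_norm0. lra.
  - assert (nz : 0 < norm A z) by lra.
    set (r := delta / (2 * norm A z)).
    assert (rpos : 0 < r) by (unfold r; apply Rdiv_lt_0_compat; lra).
    set (w := smul A (mkC r 0) z).
    assert (Pw : P w) by (apply Psmul; auto).
    assert (Eo : opp A (@zero A) = zero) by (symmetry; apply A_oppu; apply add0).
    assert (Nw : norm A (add A w (opp A zero)) < delta).
    { rewrite Eo, A_add0r. unfold w. rewrite normZ, Cabs_real, Rabs_pos_eq by lra.
      unfold r. field_simplify; lra. }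
    destruct (Hcont w Pw Nw) as [c [Hc1 Hc2]].
    specialize (Hc2 x). simpl in Hc2.
    rewrite (pi_zero A B H pi hB hr), H_opp0, H_add0r in Hc2.
    destruct hr as (_ & _ & Hsm & _). unfold w in Hc2. rewrite Hsm in Hc2 by auto.
    rewrite hnorm_smul, Rabs_pos_eq in Hc2 by lra.
    assert (r * hnorm (pi z x) <= hnorm x) by nra.
    assert (E : 2 / delta * norm A z * hnorm x = hnorm x / r) by (unfold r; field; lra).
    rewrite E. apply (Rmult_le_reg_l r); auto. field_simplify; lra.
Qed.
Lemma CS_exists (A : CStarAlgebra) (I : Type) (p : I -> multiplier A) (B : A -> Prop) (H : Hilbert) pi :
  star_subalgebra A B -> representation A B H pi ->
  (forall i, core_subalgebra A (fun x => B x /\ in_corner (p i) (p i) x)) ->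
  forall S : list I, exists C, 1 <= C /\ forall j, In j S -> forall z, B z ->
    in_corner (p j) (p j) z -> forall x, hnorm (pi z x) <= C * norm A z * hnorm x.
Proof.
  intros hB hr hcore S. induction S as [|j S IH].
  - exists 1. split. lra. intros j [].
  - destruct IH as [C [HC1 HC]].
    destruct (core_K A B _ H pi hB hr (hcore j) (fun z h => proj1 h)) as [K [HK0 HK]].
    exists (Rmax C K). split. eapply Rle_trans; [exact HC1| apply Rmax_l].
    intros j' Hj z Bz Cz x.
    pose proof (norm_ge0 A z). pose proof (hnorm_ge0 H x).
    assert (0 <= norm A z * hnorm x) by nra.
    destruct Hj as [E|Hj].
    + subst j'. eapply Rle_trans. apply HK; auto.
      rewrite Rmult_assoc, (Rmult_assoc (Rmax C K)). apply Rmult_le_compat_r. auto. apply Rmax_r.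
    + eapply Rle_trans. apply (HC j'); auto.
      rewrite Rmult_assoc, (Rmult_assoc (Rmax C K)). apply Rmult_le_compat_r. auto. apply Rmax_l.
Qed.

Lemma block_bound (A : CStarAlgebra) (I : Type) (p : I -> multiplier A) (B : A -> Prop) (H : Hilbert) pi
  (hp : forall i, mprojection (p i)) (S : list I) (C : R) :
  star_subalgebra A B -> representation A B H pi -> 1 <= C ->
  (forall j, In j S -> forall z, B z ->
    in_corner (p j) (p j) z -> forall x, hnorm (pi z x) <= C * norm A z * hnorm x) ->
  forall i j z, In j S -> B z -> in_corner (p i) (p j) z ->
  forall x, hnorm (pi z x) <= C * norm A z * hnorm x.
Proof.
  intros hB hr HC1 HC i j z Hj Bz Cz.
  assert (Bzz : B (mul A (star A z) z)).
  { destruct hB as (_ & _ & _ & Hm & Hs). auto. }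
  assert (Czz : in_corner (p j) (p j) (mul A (star A z) z)).
  { apply (corner_mul A (p j) (p i) (p i) (p j)). apply (corner_star A (p i) (p j)); auto. exact Cz. }
  assert (Hb : forall x, hnorm (pi (mul A (star A z) z) x) <= (C * (norm A z * norm A z)) * hnorm x).
  { intro x. rewrite <- norm_cstar. apply (HC j); auto. }
  intro x. pose proof (keyL A B H pi z _ hB hr Bz Hb x) as KL.
  pose proof (norm_ge0 A z). pose proof (hnorm_ge0 H x). pose proof (hnorm_ge0 H (pi z x)).
  apply sq_le; auto. apply Rmult_le_pos; [|auto]. apply Rmult_le_pos; lra.
  eapply Rle_trans. exact KL.
  assert (0 <= norm A z * norm A z * (hnorm x * hnorm x)) by (apply Rmult_le_pos; nra).
  nra.
Qed.

Lemma decomp_bound (A : CStarAlgebra) (I : Type) (p : I -> multiplier A) (B : A -> Prop) (H : Hilbert) pi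
  (hp : forall i, mprojection (p i))
  (horth : forall i j, i <> j -> mprod_zero (p i) (p j)) (S : list I) (C : R) :
  star_subalgebra A B -> representation A B H pi -> 1 <= C ->
  (forall j, In j S -> forall z, B z ->
    in_corner (p j) (p j) z -> forall x, hnorm (pi z x) <= C * norm A z * hnorm x) ->
  NoDup S -> forall w, decomp A I p B S w ->
  forall x, hnorm (pi w x) <= (INR (length S) * (INR (length S) * C)) * norm A w * hnorm x.
Proof.
  intros hB hr HC1 HC Hnd w Hw x.
  pose proof (decomp_grid A I p B S w hp horth Hnd Hw) as G.
  pose proof (decomp_pijB A I p B S w hp horth hB Hw) as PB.
  assert (Hin : forall i, In i S -> hnorm (pi (sumA (map (fun j => pij p i j w) S)) x)
             <= INR (length S) * (C * norm A w * hnorm x)).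
  { intros i Hi.
    pose proof (pi_sum_bound A B H pi (map (fun j => pij p i j w) S) x (C * norm A w * hnorm x) hB hr) as PS.
    rewrite length_map in PS. apply PS.
    - intros t Ht. apply in_map_iff in Ht. destruct Ht as [j [E Hj]]. subst. auto.
    - intros t Ht. apply in_map_iff in Ht. destruct Ht as [j [E Hj]]. subst.
      eapply Rle_trans. eapply (block_bound A I p B H pi hp S C hB hr HC1 HC i j); auto.
      exists w. reflexivity.
      pose proof (hnorm_ge0 H x).
      apply Rmult_le_compat_r; auto. apply Rmult_le_compat_l. lra.
      unfold pij. eapply Rle_trans. apply norm_mL; auto. apply norm_mR; auto. }
  assert (Hout : hnorm (pi (sumA (map (fun i => sumA (map (fun j => pij p i j w) S)) S)) x)
             <= INR (length S) * (INR (length S) * (C * norm A w * hnorm x))).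
  { pose proof (pi_sum_bound A B H pi (map (fun i => sumA (map (fun j => pij p i j w) S)) S) x
       (INR (length S) * (C * norm A w * hnorm x)) hB hr) as PS.
    rewrite length_map in PS. apply PS.
    - intros t Ht. apply in_map_iff in Ht. destruct Ht as [i [E Hi]]. subst.
      apply sumA_B; auto. intros t Ht. apply in_map_iff in Ht. destruct Ht as [j [E Hj]]. subst. auto.
    - intros t Ht. apply in_map_iff in Ht. destruct Ht as [i [E Hi]]. subst. auto. }
  rewrite <- G in Hout. eapply Rle_trans. exact Hout. right. ring.
Qed.
Fixpoint itsqrt (n : nat) (M : R) : R :=
  match n with O => M | S k => sqrt (itsqrt k M) end.

Lemma itsqrt_nonneg n M : 0 <= M -> 0 <= itsqrt n M.
Proof. intro. destruct n; simpl; auto. apply sqrt_pos. Qed.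

Lemma pow2_pos n : 0 < 2 ^ n.
Proof. apply pow_lt. lra. Qed.

Lemma itsqrt_bound n M : 0 <= M -> itsqrt n M <= 1 + M / 2 ^ n.
Proof.
  intro HM. induction n as [|n IH]; simpl.
  - unfold Rdiv. rewrite Rinv_1. lra.
  - pose proof (pow2_pos n). pose proof (itsqrt_nonneg n M HM).
    assert (0 <= M / 2 ^ n) by (unfold Rdiv; apply Rmult_le_pos; [lra| left; apply Rinv_0_lt_compat; lra]).
    replace (M / (2 * 2 ^ n)) with (M / 2 ^ n / 2) by (field; lra).
    apply sq_le. apply sqrt_pos. lra.
    rewrite sqrt_sqrt by auto. nra.
Qed.

Lemma INR_lt_pow2 n : INR n < 2 ^ n.
Proof.
  induction n as [|n IH]; simpl. lra.
  assert (1 <= 2 ^ n) by (apply pow_R1_Rle; lra).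
  destruct n. simpl. lra. rewrite S_INR in *. lra.
Qed.

Lemma lim_le a c M : 0 <= c -> 0 <= M -> (forall n, a <= (1 + M / 2 ^ n) * c) -> a <= c.
Proof.
  intros Hc HM Hn. destruct (Rle_dec a c) as [|Hac]; auto. exfalso.
  assert (eps : 0 < (a - c) / (M * c + 1)) by (apply Rdiv_lt_0_compat; nra).
  destruct (archimed_cor1 _ eps) as [N [HN HN0]].
  specialize (Hn N). pose proof (INR_lt_pow2 N). pose proof (pow2_pos N).
  assert (HI : 0 < INR N) by (apply lt_0_INR; auto).
  set (K := M * c + 1) in *.
  assert (HK : 0 < K) by (unfold K; nra).
  assert (E1 : M * c / 2 ^ N <= K / INR N).
  { apply Rle_trans with (K / 2 ^ N).
    - unfold Rdiv. apply Rmult_le_compat_r. left; apply Rinv_0_lt_compat; lra. unfold K; lra.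
    - unfold Rdiv. apply Rmult_le_compat_l. lra. left. apply Rinv_lt_contravar; nra. }
  assert (E2 : K / INR N < a - c).
  { unfold Rdiv. apply (Rmult_lt_compat_l K) in HN; auto.
    replace (K * ((a - c) / K)) with (a - c) in HN by (field; lra). lra. }
  assert (E3 : (1 + M / 2 ^ N) * c = c + M * c / 2 ^ N) by (field; lra).
  lra.
Qed.

Lemma power (A : CStarAlgebra) (B : A -> Prop) (H : Hilbert) pi (D : A -> Prop) (M : R) :
  star_subalgebra A B -> representation A B H pi -> 0 <= M ->
  (forall w, D w -> B w) -> (forall w, D w -> D (mul A w w)) ->
  (forall w, D w -> forall x, hnorm (pi w x) <= M * norm A w * hnorm x) ->
  forall n z, D z -> star A z = z -> forall x, hnorm (pi z x) <= itsqrt n M * norm A z * hnorm x.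
Proof.
  intros hB hr HM DB Dmul Hb n. induction n as [|n IH]; intros z Dz Sz x.
  - simpl. auto.
  - simpl. set (s := itsqrt n M). pose proof (itsqrt_nonneg n M HM) as Hs. fold s in Hs.
    assert (S2 : star A (mul A z z) = mul A z z) by (rewrite starM, Sz; reflexivity).
    assert (Hb2 : forall x, hnorm (pi (mul A (star A z) z) x) <= (s * (norm A z * norm A z)) * hnorm x).
    { intro y. rewrite <- (norm_cstar A z). rewrite Sz. apply IH; auto. }
    pose proof (keyL A B H pi z _ hB hr (DB z Dz) Hb2 x) as KL.
    pose proof (norm_ge0 A z). pose proof (hnorm_ge0 H x). pose proof (hnorm_ge0 H (pi z x)).
    pose proof (sqrt_pos s). pose proof (sqrt_sqrt s Hs).
    apply sq_le; auto. apply Rmult_le_pos; auto. apply Rmult_le_pos; auto.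
    eapply Rle_trans. exact KL. right.
    replace (sqrt s * norm A z * hnorm x * (sqrt s * norm A z * hnorm x)) with
      ((sqrt s * sqrt s) * (norm A z * norm A z) * (hnorm x * hnorm x)) by ring.
    rewrite H4. ring.
Qed.
Lemma nodup_cover (X : Type) (L : list X) : exists S, NoDup S /\ forall x, In x L -> In x S.
Proof.
  induction L as [|a L [S [Hnd Hc]]].
  - exists nil. split. constructor. intros x [].
  - destruct (classic (In a S)) as [Ha|Ha].
    + exists S. split; auto. intros x [E|Hx]; [subst|]; auto.
    + exists (a :: S). split. constructor; auto. intros x [E|Hx]; [left; auto|right; auto].
Qed.

Theorem mainTheorem5 (A : CStarAlgebra) (I : Type) (p : I -> multiplier A)
  (B : A -> Prop)
  (hp : forall i, mprojection (p i))
  (horth : forall i j, i <> j -> mprod_zero (p i) (p j))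
  (hB : star_subalgebra A B)
  (hdec : forall b, B b ->
     exists l : list (I * I * A),
       (forall t, In t l -> B (snd t) /\ in_corner (p (fst (fst t))) (p (snd (fst t))) (snd t)) /\
       b = sumA (map snd l))
  (hcore : forall i, core_subalgebra A (fun x => B x /\ in_corner (p i) (p i) x)) :
  core_subalgebra A B.
Proof.
  split; [exact hB|]. intros H pi hr.
  assert (contr : forall b, B b -> forall x, hnorm (pi b x) <= norm A b * hnorm x).
  { intros b Hb.
    assert (Bs : B (star A b)) by (destruct hB as (_ & _ & _ & _ & Hs); auto).
    destruct (hdec b Hb) as [l1 [H1 E1]]. destruct (hdec (star A b) Bs) as [l2 [H2 E2]].
    destruct (nodup_cover I (map (fun t => fst (fst t)) (l1 ++ l2) ++ map (fun t => snd (fst t)) (l1 ++ l2)))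
      as [S [Hnd Hcov]].
    assert (Hidx : forall t, In t (l1 ++ l2) -> In (fst (fst t)) S /\ In (snd (fst t)) S).
    { intros t Ht. split; apply Hcov; apply in_or_app.
      - left. apply in_map_iff. exists t; auto.
      - right. apply in_map_iff. exists t; auto. }
    assert (D1 : decomp A I p B S b).
    { exists l1. split; auto. intros t Ht. destruct (H1 t Ht).
      destruct (Hidx t (in_or_app _ _ _ (or_introl Ht))). auto. }
    assert (D2 : decomp A I p B S (star A b)).
    { exists l2. split; auto. intros t Ht. destruct (H2 t Ht).
      destruct (Hidx t (in_or_app _ _ _ (or_intror Ht))). auto. }
    set (y := mul A (star A b) b).
    assert (Dy : decomp A I p B S y) by (apply decomp_mul; auto).
    assert (Sy : star A y = y) by (unfold y; rewrite starM, starK; reflexivity).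
    destruct (CS_exists A I p B H pi hB hr hcore S) as [C [HC1 HC]].
    set (M := INR (length S) * (INR (length S) * C)).
    assert (HM : 0 <= M).
    { unfold M. pose proof (pos_INR (length S)). apply Rmult_le_pos; auto. apply Rmult_le_pos; lra. }
    pose proof (decomp_bound A I p B H pi hp horth S C hB hr HC1 HC Hnd) as Hbound.
    pose proof (power A B H pi (decomp A I p B S) M hB hr HM
      (fun w h => decomp_B A I p B S w hB h)
      (fun w h => decomp_mul A I p B S w w hB h h) Hbound) as Hpow.
    assert (Hy : forall x, hnorm (pi y x) <= norm A y * hnorm x).
    { intro x. apply (lim_le _ _ M).
      - apply Rmult_le_pos; [apply norm_ge0|apply hnorm_ge0].
      - exact HM.
      - intro n. eapply Rle_trans. apply (Hpow n y Dy Sy x).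
        rewrite Rmult_assoc. apply Rmult_le_compat_r.
        apply Rmult_le_pos; [apply norm_ge0|apply hnorm_ge0].
        apply itsqrt_bound; auto. }
    intro x. pose proof (keyL A B H pi b _ hB hr Hb Hy x) as KL.
    unfold y in KL. rewrite norm_cstar in KL.
    pose proof (norm_ge0 A b). pose proof (hnorm_ge0 H x). pose proof (hnorm_ge0 H (pi b x)).
    apply sq_le; auto. apply Rmult_le_pos; auto. nra. }
  intros b0 Hb0 eps Heps. exists eps. split; auto.
  intros b Hb Hlt. exists (norm A (add A b (opp A b0))). split; auto.
  intro x.
  assert (Bd : B (add A b (opp A b0))).
  { pose proof hB as (_ & Ha & _). apply Ha; auto. apply B_opp; auto. }
  pose proof (contr _ Bd x) as Hc.
  pose proof hr as (_ & Hadd & _). rewrite Hadd in Hc; auto.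
  2: apply B_opp; auto.
  rewrite (pi_opp A B H pi b0 hB hr Hb0) in Hc. exact Hc.
Qed.
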